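(* Let $G$ be a group. The following are equivalent: (1) every transitive function $u:\rho\to G$ is trivial; (2) every transitive function $w:\le\;\to G$ on the partial order $\le$ of $\mathcal C$ is trivial; (3) for every function $v:\Gamma_1\to G$ such that $v(a_1)\cdots v(a_r)=v(b_1)\cdots v(b_s)$ for all paths $a_1\cdots a_r$ and $b_1\cdots b_s$ in $\Gamma$ with the same start vertex and the same end vertex, there exists $f:\Gamma_0\to G$ with $v(a)=f(s(a))f(t(a))^{-1}$ for every $a\in\Gamma_1$.
   Context: $\rho$ is a preorder on $\{1,\dots,n\}$; $i\sim j$ iff $i\rho j$ and $j\rho i$; $\mathcal C$ is the set of classes, $\hat i$ the class of $i$, with partial order $\hat i\le\hat j$ iff $i\rho j$. For a preorder (or partial order) $\pi$ on a set $X$, a transitive function on $\pi$ with values in a group $G$ is a map $u:\pi\to G$ (defined on pairs $(x,y)$ with $x\pi y$) such that $u(x,y)u(y,z)=u(x,z)$ whenever $x\pi y$, $y\pi z$; it is trivial if there are $g_x\in G$ ($x\in X$) with $u(x,y)=g_xg_y^{-1}$ for all $x\pi y$. $\Gamma=(\Gamma_0,\Gamma_1)$ is the directed graph with vertex set $\Gamma_0=\mathcal C$ and an arrow $a$ from $\alpha$ to $\beta$ (written $s(a)=\alpha$, $t(a)=\beta$) iff $\alpha<\beta$ and there is no $\gamma$ with $\alpha<\gamma<\beta$ (the Hasse diagram). A path $a_1\cdots a_r$ means arrows with $t(a_i)=s(a_{i+1})$. *)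

(* Defs.v *)
From HB Require Import structures.
From mathcomp Require Import all_boot.
Set Implicit Arguments. Unset Strict Implicit. Unset Printing Implicit Defensive.
Local Open Scope group_scope.

(* A function on r (defined on pairs (x,y) with r x y) is
   represented by a total map X -> X -> G of which only the values on related
   pairs are ever used. *)
Definition transitive_fun (G : groupType) (X : Type) (r : X -> X -> bool)
    (u : X -> X -> G) : Prop :=
  forall x y z, r x y -> r y z -> u x y * u y z = u x z.

Definition trivial_fun (G : groupType) (X : Type) (r : X -> X -> bool)
    (u : X -> X -> G) : Prop :=
  exists g : X -> G, forall x y, r x y -> u x y = g x * (g y)^-1.

Definition is_preorder (n : nat) (rho : rel 'I_n) : Prop :=
  reflexive rho /\ transitive rho.

Section Classes.
Variables (n : nat) (rho : rel 'I_n).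

Definition equivp (i j : 'I_n) : bool := rho i j && rho j i.

Definition cls_of (i : 'I_n) : {set 'I_n} := [set j | equivp i j].

Definition classes : {set {set 'I_n}} := [set cls_of i | i : 'I_n].

(* the type of classes (vertex set Gamma_0 of the Hasse diagram) *)
Definition cls : Type := {A : {set 'I_n} | A \in classes}.

Definition cle (a b : cls) : bool :=
  [exists i : 'I_n, exists j : 'I_n,
     [&& val a == cls_of i, val b == cls_of j & rho i j]].

Definition clt (a b : cls) : bool := (a != b) && cle a b.

(* arrows of the Hasse diagram Gamma: a -> b iff a < b with nothing between;
   there is at most one arrow between two vertices, so Gamma_1 is identified
   with the set of pairs (a, b) with hasse_arrow a b, s = first component,
   t = second component. *)
Definition hasse_arrow (a b : cls) : bool :=
  clt a b && ~~ [exists c : cls, clt a c && clt c b].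

(* a path in Gamma starting at vertex a is given by the sequence s of the
   successive target vertices of its arrows; it ends at last a s. *)
Definition hasse_path (a : cls) (s : seq cls) : bool := path hasse_arrow a s.

Fixpoint path_prod (G : groupType) (v : cls -> cls -> G) (a : cls) (s : seq cls)
    : G :=
  match s with
  | [::] => 1
  | b :: s' => v a b * path_prod v b s'
  end.

End Classes.

(* Main.v *)
Require Import Defs.
From HB Require Import structures.
From mathcomp Require Import all_boot.
Set Implicit Arguments. Unset Strict Implicit. Unset Printing Implicit Defensive.
Local Open Scope group_scope.

Lemma cls_ofE n (rho : rel 'I_n) (i j : 'I_n) : is_preorder rho ->
  (cls_of rho i == cls_of rho j) = equivp rho i j.
Proof.
move=> [Hr Ht]; apply/eqP/idP => [E|].
  have : j \in cls_of rho j by rewrite inE /equivp Hr.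
  by rewrite -E inE.
move=> /andP[Hij Hji]; apply/setP => k; rewrite !inE /equivp.
apply/andP/andP => [[H1 H2]|[H1 H2]]; split.
- exact: Ht H1.
- exact: Ht Hij.
- exact: Ht H1.
- exact: Ht Hji.
Qed.

Lemma rep_ex n (rho : rel 'I_n) (a : cls rho) : exists i, val a == cls_of rho i.
Proof. by case: a => A /= /imsetP [i _ ->]; exists i. Qed.

Definition rep n (rho : rel 'I_n) (a : cls rho) : 'I_n := xchoose (rep_ex a).

Lemma rep_spec n (rho : rel 'I_n) (a : cls rho) : val a = cls_of rho (rep a).
Proof. exact/eqP/(xchooseP (rep_ex a)). Qed.

Lemma cls_in n (rho : rel 'I_n) (i : 'I_n) : cls_of rho i \in classes rho.
Proof. by apply/imsetP; exists i. Qed.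

Definition cl n (rho : rel 'I_n) (i : 'I_n) : cls rho := exist (fun A => A \in classes rho) _ (cls_in rho i).

Lemma cle_rep n (rho : rel 'I_n) (a b : cls rho) : is_preorder rho ->
  cle a b = rho (rep a) (rep b).
Proof.
move=> Hp; have [Hr Ht] := Hp; apply/existsP/idP => [[i /existsP [j]]|H].
  case/and3P; rewrite !rep_spec !cls_ofE // => /andP [H1 _] /andP [_ H2] H3.
  exact: Ht _ _ _ (Ht _ _ _ H1 H3) H2.
by exists (rep a); apply/existsP; exists (rep b); rewrite -!rep_spec !eqxx H.
Qed.

Lemma eq_rep n (rho : rel 'I_n) (a b : cls rho) : is_preorder rho ->
  (a == b) = equivp rho (rep a) (rep b).
Proof. by move=> Hp; rewrite -val_eqE /= !rep_spec cls_ofE. Qed.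

Lemma cl_rep n (rho : rel 'I_n) (a : cls rho) : cl rho (rep a) = a.
Proof. by apply: val_inj; rewrite /= rep_spec. Qed.

Lemma rep_cl n (rho : rel 'I_n) (i : 'I_n) : is_preorder rho ->
  equivp rho (rep (cl rho i)) i.
Proof. by move=> Hp; rewrite -cls_ofE // -rep_spec. Qed.

Lemma cle_cl n (rho : rel 'I_n) (i j : 'I_n) : is_preorder rho ->
  cle (cl rho i) (cl rho j) = rho i j.
Proof.
move=> Hp; have [Hr Ht] := Hp; rewrite cle_rep //.
have /andP[h1 h2] := rep_cl i Hp; have /andP[h3 h4] := rep_cl j Hp.
apply/idP/idP => H; [exact: Ht _ _ _ h2 (Ht _ _ _ H h3) | exact: Ht _ _ _ h1 (Ht _ _ _ H h4)].
Qed.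

Lemma cle_refl n (rho : rel 'I_n) (a : cls rho) : is_preorder rho -> cle a a.
Proof. by move=> Hp; rewrite cle_rep //; case: Hp. Qed.

Lemma cle_trans n (rho : rel 'I_n) (a b c : cls rho) : is_preorder rho ->
  cle a b -> cle b c -> cle a c.
Proof. move=> Hp; rewrite !cle_rep //; case: Hp => _ Ht; exact: Ht. Qed.

Lemma cle_anti n (rho : rel 'I_n) (a b : cls rho) : is_preorder rho ->
  cle a b -> cle b a -> a = b.
Proof. by move=> Hp; rewrite !cle_rep // => h1 h2; apply/eqP; rewrite eq_rep // /equivp h1. Qed.

Lemma hasse_cle n (rho : rel 'I_n) (a b : cls rho) : hasse_arrow a b -> cle a b.
Proof. by case/andP => /andP []. Qed.

Lemma hasse_path_ex n (rho : rel 'I_n) (a b : cls rho) : is_preorder rho ->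
  cle a b -> exists s, hasse_path a s && (last a s == b).
Proof.
move=> Hp Hab0.
suff: forall k (a b : cls rho), #|[set c | cle a c && cle c b]| <= k -> cle a b ->
  exists s, hasse_path a s && (last a s == b) by move=> H; exact: H _ a b (leqnn _) Hab0.
clear a b Hab0; elim=> [|k IH] a b Hk Hab.
  have : 0 < #|[set c | cle a c && cle c b]|.
    by apply/card_gt0P; exists b; rewrite inE Hab cle_refl.
  by rewrite ltnNge Hk.
have [<-|Hne] := eqVneq a b; first by exists [::]; rewrite /hasse_path /= eqxx.
case Har: (hasse_arrow a b).
  by exists [:: b]; rewrite /hasse_path /= Har eqxx.
have /existsP [c /andP [Hac Hcb]] : [exists c, clt a c && clt c b].
  by move: Har; rewrite /hasse_arrow /clt Hne Hab /= => /negbFE.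
move: Hac Hcb; rewrite /clt => /andP [Nac Lac] /andP [Ncb Lcb].
have [s /andP [Ps /eqP Ls]] : exists s, hasse_path a s && (last a s == c).
  apply: IH Lac; rewrite -ltnS; apply: leq_trans Hk; apply: proper_card.
  apply/properP; split.
    apply/subsetP => x; rewrite !inE => /andP [h1 h2].
    by rewrite h1 (cle_trans Hp h2 Lcb).
  exists b; first by rewrite inE Hab cle_refl.
  rewrite inE negb_and; apply/orP; right; apply/negP => Hbc.
  by move: Ncb; rewrite (cle_anti Hp Lcb Hbc) eqxx.
have [t /andP [Pt /eqP Lt]] : exists t, hasse_path c t && (last c t == b).
  apply: IH Lcb; rewrite -ltnS; apply: leq_trans Hk; apply: proper_card.
  apply/properP; split.
    apply/subsetP => x; rewrite !inE => /andP [h1 h2].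
    by rewrite h2 (cle_trans Hp Lac h1).
  exists a; first by rewrite inE Hab cle_refl.
  rewrite inE negb_and; apply/orP; left; apply/negP => Hca.
  by move: Nac; rewrite (cle_anti Hp Lac Hca) eqxx.
exists (s ++ t); rewrite /hasse_path cat_path last_cat Ls.
by move: Ps Pt; rewrite /hasse_path -Ls => -> ->; rewrite Ls Lt eqxx.
Qed.

Lemma path_prod_cat n (rho : rel 'I_n) (G : groupType) (v : cls rho -> cls rho -> G)
  a s t : path_prod v a (s ++ t) = path_prod v a s * path_prod v (last a s) t.
Proof. by elim: s a => [|b s IH] a /=; rewrite ?mul1g // IH mulgA. Qed.

Lemma tf_refl (G : groupType) (X : Type) (r : X -> X -> bool) (u : X -> X -> G) x :
  transitive_fun r u -> r x x -> u x x = 1.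
Proof. by move=> Ht Hr; apply: (@mulIg _ (u x x)); rewrite mul1g Ht. Qed.

Lemma tf_inv (G : groupType) (X : Type) (r : X -> X -> bool) (u : X -> X -> G) x y :
  transitive_fun r u -> r x y -> r y x -> r x x -> (u x y)^-1 = u y x.
Proof. by move=> Ht h1 h2 h3; apply: mulg1_eq; rewrite Ht // (tf_refl Ht). Qed.

Lemma dir12 n (rho : rel 'I_n) (G : groupType) : is_preorder rho ->
  (forall u : 'I_n -> 'I_n -> G, transitive_fun rho u -> trivial_fun rho u) ->
  (forall w : cls rho -> cls rho -> G,
          transitive_fun (@cle n rho) w -> trivial_fun (@cle n rho) w).
Proof.
move=> Hp H1 w Hw.
have [g Hg] := H1 (fun i j => w (cl rho i) (cl rho j)) (fun x y z h1 h2 =>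
  Hw _ _ _ (eq_ind _ _ h1 _ (esym (cle_cl x y Hp)))
           (eq_ind _ _ h2 _ (esym (cle_cl y z Hp)))).
exists (fun a => g (rep a)) => a b Hab.
by rewrite -Hg -?cle_rep // !cl_rep.
Qed.

Lemma dir21 n (rho : rel 'I_n) (G : groupType) : is_preorder rho ->
  (forall w : cls rho -> cls rho -> G,
          transitive_fun (@cle n rho) w -> trivial_fun (@cle n rho) w) ->
  (forall u : 'I_n -> 'I_n -> G, transitive_fun rho u -> trivial_fun rho u).
Proof.
move=> Hp H2 u Hu.
have [h Hh] : trivial_fun (@cle n rho) (fun a b => u (rep a) (rep b)).
  apply: H2 => x y z; rewrite !cle_rep //; exact: Hu.
have [Hr Ht] := Hp.
exists (fun i => u i (rep (cl rho i)) * h (cl rho i)) => i j Hij.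
have /andP [a1 a2] := rep_cl i Hp; have /andP [b1 b2] := rep_cl j Hp.
rewrite invgM mulgA -(mulgA _ (h _)) -Hh ?cle_cl //.
rewrite (tf_inv Hu) ?Hr // Hu //; last by rewrite -cle_rep ?cle_cl.
by rewrite Hu //; apply: Ht _ _ _ Hij b2.
Qed.

Lemma dir23 n (rho : rel 'I_n) (G : groupType) : is_preorder rho ->
  (forall w : cls rho -> cls rho -> G,
          transitive_fun (@cle n rho) w -> trivial_fun (@cle n rho) w) ->
  (forall v : cls rho -> cls rho -> G,
          (forall (a : cls rho) (s t : seq (cls rho)),
             hasse_path a s -> hasse_path a t -> last a s = last a t ->
             path_prod v a s = path_prod v a t) ->
          exists f : cls rho -> G,
            forall a b : cls rho, hasse_arrow a b -> v a b = f a * (f b)^-1).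
Proof.
move=> Hp H2 v Hv.
have ex : forall a b : cls rho, exists s,
    cle a b ==> (hasse_path a s && (last a s == b)).
  move=> a b; case Hab: (cle a b); last by exists [::].
  by have [s Hs] := hasse_path_ex Hp Hab; exists s.
pose w a b := path_prod v a (xchoose (ex a b)).
have wP : forall a b, cle a b -> hasse_path a (xchoose (ex a b)) /\
    last a (xchoose (ex a b)) = b.
  move=> a b Hab; have := xchooseP (ex a b); move: (xchoose _) => s.
  by rewrite Hab /= => /andP [h1 /eqP h2].
have [f Hf] : trivial_fun (@cle n rho) w.
  apply: H2 => a b c Hab Hbc.
  have [Pa La] := wP a b Hab; have [Pb Lb] := wP b c Hbc.
  have [Pc Lc] := wP a c (cle_trans Hp Hab Hbc).
  rewrite /w; move: (xchoose (ex a b)) (xchoose (ex b c)) (xchoose (ex a c)) Pa La Pb Lb Pc Lc.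
  move=> s1 s2 s3 Pa La Pb Lb Pc Lc.
  rewrite -La -path_prod_cat; apply: Hv => //.
    by rewrite /hasse_path cat_path; apply/andP; split => //; rewrite La.
  by rewrite last_cat La Lb Lc.
exists f => a b Hab; rewrite -Hf ?hasse_cle //.
have [Pa La] := wP a b (hasse_cle Hab).
rewrite /w; move: (xchoose (ex a b)) Pa La => s1 Pa La.
rewrite -(Hv a [:: b] s1) /= ?mulg1 //.
by rewrite /hasse_path /= Hab.
Qed.

Lemma dir32 n (rho : rel 'I_n) (G : groupType) : is_preorder rho ->
  (forall v : cls rho -> cls rho -> G,
          (forall (a : cls rho) (s t : seq (cls rho)),
             hasse_path a s -> hasse_path a t -> last a s = last a t ->
             path_prod v a s = path_prod v a t) ->
          exists f : cls rho -> G,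
            forall a b : cls rho, hasse_arrow a b -> v a b = f a * (f b)^-1) ->
  (forall w : cls rho -> cls rho -> G,
          transitive_fun (@cle n rho) w -> trivial_fun (@cle n rho) w).
Proof.
move=> Hp H3 w Hw.
have pw : forall a s, hasse_path a s ->
    cle a (last a s) /\ path_prod w a s = w a (last a s).
  move=> a s; elim: s a => [|b s IH] a /=.
    by move=> _; rewrite (tf_refl Hw) ?cle_refl.
  rewrite /hasse_path /= => /andP [Hab Ps]; have [h1 h2] := IH b Ps.
  split; first exact: cle_trans Hp (hasse_cle Hab) h1.
  by rewrite h2 Hw // hasse_cle.
have [f Hf] := H3 w (fun a s t Ps Pt L =>
  etrans (proj2 (pw a s Ps)) (etrans (congr1 (w a) L) (esym (proj2 (pw a t Pt))))).
exists f => a b Hab.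
have [s /andP [Ps /eqP Ls]] := hasse_path_ex Hp Hab.
rewrite -Ls -(proj2 (pw a s Ps)); clear Ls Hab.
elim: s a Ps => [|c s IH] a /=; first by rewrite mulgV.
rewrite /hasse_path /= => /andP [Hac Ps].
by rewrite IH // Hf // mulgA mulgVK.
Qed.

Theorem proposition5p4 (n : nat) (rho : rel 'I_n) (G : groupType) :
  is_preorder rho ->
  [<-> (* (1) *)
       (forall u : 'I_n -> 'I_n -> G,
          transitive_fun rho u -> trivial_fun rho u);
       (* (2) *)
       (forall w : cls rho -> cls rho -> G,
          transitive_fun (@cle n rho) w -> trivial_fun (@cle n rho) w);
       (* (3) *)
       (forall v : cls rho -> cls rho -> G,
          (forall (a : cls rho) (s t : seq (cls rho)),
             hasse_path a s -> hasse_path a t -> last a s = last a t ->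
             path_prod v a s = path_prod v a t) ->
          exists f : cls rho -> G,
            forall a b : cls rho, hasse_arrow a b -> v a b = f a * (f b)^-1)].
Proof.
move=> Hp; tfae.
- exact: dir12.
- exact: dir23.
- by move=> H3; apply: dir21 => //; apply: dir32.
Qed.
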